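(* Let $q$ be a prime power with $q\equiv 3\pmod 4$, let $s\in\mathbb{N}$ be even, let $b\in\mathbb{F}_q^*$, and let $f(x)=x^s\left(x^{(q-1)/2}+b\right)\in\mathbb{F}_q[x]$. If $f$ is a permutation polynomial of $\mathbb{F}_q$, then $\delta_f\le 4s-3$.
   Context: A polynomial $f\in\mathbb{F}_q[x]$ is a permutation polynomial of $\mathbb{F}_q$ if $c\mapsto f(c)$ is a bijection of $\mathbb{F}_q$. For $a\in\mathbb{F}_q^*$, $\Delta_{f,a}(x)=f(x+a)-f(x)$, and the differential uniformity is $\delta_f=\max_{a\in\mathbb{F}_q^*,\,c\in\mathbb{F}_q}|\{x\in\mathbb{F}_q:\Delta_{f,a}(x)=c\}|$. *)

(* Defs.v *)
From HB Require Import structures.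
From mathcomp Require Import all_boot all_order all_algebra all_field.
Set Implicit Arguments. Unset Strict Implicit. Unset Printing Implicit Defensive.
Import GRing.Theory.
Local Open Scope ring_scope.

Definition is_perm_poly (F : finFieldType) (f : {poly F}) : Prop :=
  bijective (fun c : F => f.[c]).

Definition diff_count (F : finFieldType) (f : {poly F}) (a c : F) : nat :=
  #|[set x : F | f.[x + a] - f.[x] == c]|.

Definition diff_unif (F : finFieldType) (f : {poly F}) : nat :=
  \max_(a : F | a != 0) \max_(c : F) diff_count f a c.

(* Main.v *)
Require Import Defs.
From HB Require Import structures.
From mathcomp Require Import all_boot all_order all_algebra all_field.
From mathcomp Require Import zify ring.
Import GRing.Theory.
Set Implicit Arguments. Unset Strict Implicit.
Local Open Scope ring_scope.


Definition qchi (F : finFieldType) (x : F) := x ^+ ((#|F| - 1) %/ 2).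

Lemma hfacts (F : finFieldType) : (#|F| %% 4 = 3)%N ->
  let h := ((#|F| - 1) %/ 2)%N in
  [/\ (#|F| - 1 = h + h)%N, odd h & (0 < h)%N].
Proof.
move=> Hq h.
have Hodd : (h %% 2 = 1)%N by rewrite /h; lia.
split; first by rewrite /h; lia.
  by move: Hodd; rewrite modn2; case: (odd h).
by rewrite /h; lia.
Qed.

Lemma eta_sq (F : finFieldType) (x : F) : (#|F| %% 4 = 3)%N -> x != 0 ->
  qchi x ^+ 2 = 1.
Proof.
move=> Hq Hx; have [Hh _ _] := hfacts Hq.
rewrite /qchi -exprM muln2 -addnn -Hh.
have Hc := expf_card x.
have Hpos : (0 < #|F|)%N by apply/card_gt0P; exists 0.
move: Hc; rewrite -{1}(subnK Hpos) exprD expr1 => Hc.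
by apply: (mulIf Hx); rewrite mul1r.
Qed.

Lemma eta_pm (F : finFieldType) (x : F) : (#|F| %% 4 = 3)%N -> x != 0 ->
  qchi x = 1 \/ qchi x = -1.
Proof.
move=> Hq Hx; have := eta_sq Hq Hx; move/eqP; rewrite sqrf_eq1.
by case/orP => /eqP ->; [left|right].
Qed.

Lemma eta0 (F : finFieldType) : (#|F| %% 4 = 3)%N -> qchi (0 : F) = 0.
Proof. by move=> Hq; have [_ _ Hh] := hfacts Hq; rewrite /qchi expr0n; case: eqP Hh => [->|]. Qed.

Lemma etaM (F : finFieldType) (x y : F) : qchi (x * y) = qchi x * qchi y.
Proof. by rewrite /qchi exprMn. Qed.

Lemma etaN1 (F : finFieldType) : (#|F| %% 4 = 3)%N -> qchi (-1 : F) = -1.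
Proof.
move=> Hq; have [_ Ho _] := hfacts Hq.
by rewrite /qchi -signr_odd Ho expr1.
Qed.

Lemma two_neq0 (F : finFieldType) : (#|F| %% 4 = 3)%N -> (2 : F) != 0.
Proof.
move=> Hq; apply/negP => /eqP H2.
have Hc : (2 \in [pchar F])%N by rewrite inE /=; apply/eqP.
have := card_pprimeChar Hc => /= Hcard.
move: Hq; rewrite Hcard; set n := logn _ _.
case: n => [|[|n]] //.
by rewrite !expnS mulnA modnMr.
Qed.

Lemma one_neq_m1 (F : finFieldType) : (#|F| %% 4 = 3)%N -> (1 : F) != -1.
Proof.
move=> Hq; apply/negP => /eqP H.
have := two_neq0 Hq.
by rewrite -[2]/(1 + 1) {2}H subrr eqxx.
Qed.


Definition fv (F : finFieldType) (s : nat) (b x : F) := x ^+ s * (qchi x + b).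

Lemma horner_f (F : finFieldType) (s : nat) (b x : F) :
  ('X^s * ('X^((#|F| - 1) %/ 2) + b%:P)).[x] = fv s b x.
Proof. by rewrite /fv hornerM hornerD !hornerXn hornerC. Qed.

Definition gp (F : finFieldType) (s : nat) (a b c e1 e2 : F) : {poly F} :=
  (e1 + b) *: ('X + a%:P) ^+ s - (e2 + b) *: 'X^s - c%:P.

Lemma horner_g (F : finFieldType) (s : nat) (a b c e1 e2 x : F) :
  (gp s a b c e1 e2).[x] = (e1 + b) * (x + a) ^+ s - (e2 + b) * x ^+ s - c.
Proof. by rewrite /gp !hornerD !hornerN !hornerZ hornerC hornerXn horner_exp hornerD hornerX hornerC. Qed.

Lemma even_exp (F : finFieldType) (e : F) (s : nat) : ~~ odd s ->
  e = 1 \/ e = -1 -> e ^+ s = 1.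
Proof. by move=> Hs [->|->]; rewrite ?expr1n // -signr_odd (negbTE Hs) expr0. Qed.

Lemma expN_even (F : finFieldType) (x : F) (s : nat) : ~~ odd s -> (- x) ^+ s = x ^+ s.
Proof. by move=> Hs; rewrite exprNn -signr_odd (negbTE Hs) expr0 mul1r. Qed.

Lemma XaddC_exp_size (F : finFieldType) (a : F) (s : nat) :
  size (('X + a%:P) ^+ s) = s.+1.
Proof.
have Hm : ('X + a%:P) ^+ s \is monic by apply: monic_exp; apply: monicXaddC.
have := size_exp ('X + a%:P) s; rewrite size_XaddC mul1n.
have : ('X + a%:P) ^+ s != 0 by apply: monic_neq0.
rewrite -size_poly_eq0 -lt0n => Hn Hsz; by rewrite -(prednK Hn) Hsz.
Qed.

Lemma XaddC_exp_coef_s (F : finFieldType) (a : F) (s : nat) :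
  (('X + a%:P) ^+ s)`_s = 1.
Proof.
have Hm : ('X + a%:P) ^+ s \is monic by apply: monic_exp; apply: monicXaddC.
by move/eqP: Hm; rewrite lead_coefE XaddC_exp_size.
Qed.

Lemma coef_gp (F : finFieldType) (s : nat) (a b c e1 e2 : F) j :
  (gp s a b c e1 e2)`_j = (e1 + b) * (('X + a%:P) ^+ s)`_j - (e2 + b) * (j == s)%:R
     - (if j == 0%N then c else 0).
Proof. by rewrite /gp !coefB !coefZ coefXn coefC. Qed.

Lemma size_gp (F : finFieldType) (s : nat) (a b c e1 e2 : F) : (0 < s)%N ->
  (size (gp s a b c e1 e2) <= s.+1)%N.
Proof.
move=> Hs; apply/leq_sizeP => j Hj; rewrite coef_gp.
have -> : (('X + a%:P) ^+ s)`_j = 0.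
  by apply: nth_default; rewrite XaddC_exp_size.
have -> : (j == s) = false by apply/negbTE; rewrite neq_ltn Hj orbT.
case: eqP => [Hj0|_]; [by rewrite Hj0 ltn0 in Hj | by rewrite mulr0 mulr0n mulr0 !subr0].
Qed.

Lemma size_gp_same (F : finFieldType) (s : nat) (a b c e : F) : (0 < s)%N ->
  (size (gp s a b c e e) <= s)%N.
Proof.
move=> Hs; apply/leq_sizeP => j Hj; rewrite coef_gp.
case: (ltngtP j s) Hj => [|Hlt|->] Hj //.
  have -> : (('X + a%:P) ^+ s)`_j = 0.
    by apply: nth_default; rewrite XaddC_exp_size.
  case: eqP => [Hj0|_]; [by rewrite Hj0 ltn0 in Hlt | by rewrite mulr0 ?mulr0n ?mulr0 !subr0].
rewrite XaddC_exp_coef_s ?eqxx ?mulr1.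
case: eqP => [Hj0|_]; [by rewrite Hj0 ltn0 in Hs | by rewrite subrr subr0].
Qed.

Lemma coef_gp_s (F : finFieldType) (s : nat) (a b c e1 e2 : F) : (0 < s)%N ->
  (gp s a b c e1 e2)`_s = e1 - e2.
Proof.
move=> Hs; rewrite coef_gp XaddC_exp_coef_s eqxx.
case: eqP => [Hj0|_]; [by rewrite Hj0 ltn0 in Hs | rewrite subr0 mulr1 mulr1; ring].
Qed.

Lemma coef_gp_sm1 (F : finFieldType) (s : nat) (a b c e1 e2 : F) : (1 < s)%N ->
  (gp s a b c e1 e2)`_s.-1 = (e1 + b) * (('X + a%:P) ^+ s)`_s.-1.
Proof.
move=> Hs; rewrite coef_gp.
have -> : (s.-1 == s) = false by apply/negbTE; lia.
have -> : (s.-1 == 0%N) = false by apply/negbTE; lia.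
by rewrite mulr0n mulr0 !subr0.
Qed.

Lemma zero_exp (F : finFieldType) (s : nat) : (0 < s)%N -> (0 : F) ^+ s = 0.
Proof. by case: s => // n _; rewrite exprS mul0r. Qed.

Lemma gp_neq0 (F : finFieldType) (s : nat) (a b c e1 e2 : F) : ~~ odd s -> (0 < s)%N ->
  a != 0 -> e1 + e2 + 2 * b != 0 -> gp s a b c e1 e2 != 0.
Proof.
move=> Hev Hs Ha He; apply/negP => /eqP Hg.
have H0 := horner_g s a b c e1 e2 0.
have H1 := horner_g s a b c e1 e2 (-a).
rewrite Hg horner0 add0r zero_exp // in H0.
rewrite Hg horner0 addNr zero_exp // expN_even // in H1.
have : a ^+ s * (e1 + e2 + 2 * b) = 0.
  have E : a ^+ s * (e1 + e2 + 2 * b) = ((e1 + b) * a ^+ s - (e2 + b) * 0 - c) -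
    ((e1 + b) * 0 - (e2 + b) * a ^+ s - c) by ring.
  by rewrite E -H0 -H1 subrr.
by move/eqP; rewrite mulf_eq0 (negbTE He) orbF expf_eq0 (negbTE Ha) andbF.
Qed.


Lemma gp_root_class (F : finFieldType) s (a b c e1 e2 x : F) :
  qchi (x + a) = e1 -> qchi x = e2 -> fv s b (x + a) - fv s b x = c ->
  root (gp s a b c e1 e2) x.
Proof.
move=> H1 H2 H; rewrite rootE horner_g -H /fv H1 H2; apply/eqP; ring.
Qed.

Lemma gp_root0 (F : finFieldType) s (a b c e2 : F) : (0 < s)%N ->
  fv s b a - fv s b 0 = c -> root (gp s a b c (qchi a) e2) 0.
Proof.
move=> Hs H; rewrite rootE horner_g -H /fv add0r !zero_exp //; apply/eqP; ring.
Qed.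

Lemma gp_rootma (F : finFieldType) s (a b c e1 : F) : (0 < s)%N ->
  fv s b 0 - fv s b (-a) = c -> root (gp s a b c e1 (qchi (-a))) (-a).
Proof.
move=> Hs H; rewrite rootE horner_g -H /fv addNr !zero_exp //; apply/eqP; ring.
Qed.

Lemma card_roots_lt (F : finFieldType) (p : {poly F}) (A : {set F}) : p != 0 ->
  (forall x, x \in A -> root p x) -> (#|A| < size p)%N.
Proof.
move=> Hp HA; rewrite cardE; apply: max_poly_roots => //; last exact: enum_uniq.
by apply/allP => x; rewrite mem_enum; apply: HA.
Qed.

Lemma vieta0 (F : finFieldType) (p : {poly F}) (A : {set F}) : size p = #|A|.+1 ->
  (forall x, x \in A -> root p x) ->
  p.[0] = lead_coef p * \prod_(z <- enum A) (- z).
Proof.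
move=> Hs HA.
have Hall : all (root p) (enum A) by apply/allP => x; rewrite mem_enum; apply: HA.
have Hu : uniq_roots (enum A) by rewrite uniq_rootsE enum_uniq.
have Hsz : size p = (size (enum A)).+1 by rewrite Hs cardE.
rewrite {1}(all_roots_prod_XsubC Hsz Hall Hu) hornerZ horner_prod.
by congr (_ * _); apply: eq_bigr => z _; rewrite hornerXsubC add0r.
Qed.

Lemma qchi_prodN (F : finFieldType) (rs : seq F) (e : F) : (#|F| %% 4 = 3)%N ->
  (forall z, z \in rs -> qchi z = e) ->
  qchi (\prod_(z <- rs) (- z)) = (- e) ^+ size rs.
Proof.
move=> Hq; elim: rs => [|z rs IH] H.
  by rewrite big_nil /qchi expr1n expr0.
rewrite big_cons etaM IH; last by move=> y Hy; apply: H; rewrite inE Hy orbT.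
rewrite -mulN1r etaM etaN1 // H ?inE ?eqxx //= exprS; ring.
Qed.


Lemma qchi_fv (F : finFieldType) s (b x : F) : (#|F| %% 4 = 3)%N -> ~~ odd s ->
  x != 0 -> qchi (fv s b x) = qchi (qchi x + b).
Proof.
move=> Hq Hs Hx; rewrite /fv etaM.
have -> : qchi (x ^+ s) = qchi x ^+ s by rewrite /qchi exprAC.
by rewrite even_exp // ?mul1r //; apply: eta_pm.
Qed.

Lemma perm_same_false (F : finFieldType) s (b e : F) : (#|F| %% 4 = 3)%N -> ~~ odd s ->
  injective (fv s b) -> qchi (1 + b) = e -> qchi (-1 + b) = e -> e != 0 -> False.
Proof.
move=> Hq Hs Hinj E1 E2 He.
have [Hh Ho Hpos] := hfacts Hq.
set h := ((#|F| - 1) %/ 2)%N in Hh Ho Hpos.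
pose I := fv s b @: [set~ (0 : F)].
pose T := [set y : F | qchi y == e].
have HI : #|I| = #|F|.-1 by rewrite card_imset // cardsC1.
have HIT : I \subset T.
  apply/subsetP => y /imsetP [x]; rewrite in_setC1 => Hx ->.
  rewrite inE qchi_fv //.
  by have [->|->] := eta_pm Hq Hx; [rewrite E1 | rewrite E2].
have HT : (#|T| < h.+1)%N.
  have Hp : 'X^h - e%:P != 0 by apply: monic_neq0; apply: monicXnsubC.
  rewrite -(size_XnsubC e Hpos); apply: card_roots_lt => // y.
  by rewrite inE rootE !hornerE subr_eq0.
have := subset_leq_card HIT; rewrite HI.
have Hpos' : (0 < #|F|)%N by apply/card_gt0P; exists 0.
move: HT; lia.
Qed.

Lemma perm_cond (F : finFieldType) s (b : F) : (#|F| %% 4 = 3)%N -> (0 < s)%N -> ~~ odd s ->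
  injective (fv s b) -> qchi (1 + b) * qchi (-1 + b) = -1.
Proof.
move=> Hq Hs0 Hs Hinj.
have Hf0 : fv s b 0 = 0 by rewrite /fv zero_exp // mul0r.
have Hb1 : 1 + b != 0.
  apply/negP => /eqP Hb.
  have : fv s b 1 = fv s b 0 by rewrite Hf0 /fv expr1n /qchi expr1n mul1r.
  by move/Hinj/eqP; rewrite oner_eq0.
have Hbm : -1 + b != 0.
  apply/negP => /eqP Hb.
  have : fv s b (-1) = fv s b 0 by rewrite Hf0 /fv etaN1 // Hb expN_even // expr1n mul1r.
  by move/Hinj/eqP; rewrite oppr_eq0 oner_eq0.
have Hm1 : (-1 : F) != 0 by rewrite oppr_eq0 oner_eq0.
have [E1|E1] := eta_pm Hq Hb1; have [E2|E2] := eta_pm Hq Hbm.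
- by exfalso; apply: (perm_same_false Hq Hs Hinj E1 E2); rewrite oner_eq0.
- by rewrite E1 E2 mul1r.
- by rewrite E1 E2 mulN1r.
- by exfalso; apply: (perm_same_false Hq Hs Hinj E1 E2).
Qed.


Lemma class_vieta (F : finFieldType) s (a b c e1 e2 : F) (A : {set F}) :
  (#|F| %% 4 = 3)%N -> (0 < s)%N ->
  size (gp s a b c e1 e2) = #|A|.+1 -> (forall x, x \in A -> root (gp s a b c e1 e2) x) ->
  (forall x, x \in A -> qchi x = e2) ->
  qchi ((e1 + b) * a ^+ s - c) = qchi (lead_coef (gp s a b c e1 e2)) * (- e2) ^+ #|A|.
Proof.
move=> Hq Hs Hsz Hr He.
have := vieta0 Hsz Hr; rewrite horner_g add0r zero_exp // mulr0 subr0 => ->.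
rewrite etaM (qchi_prodN (e:=e2)) //; first by rewrite -cardE.
by move=> z; rewrite mem_enum; apply: He.
Qed.

Lemma final_contra (F : finFieldType) s (a b c : F) (A11 A1m Am1 Amm : {set F}) :
  (#|F| %% 4 = 3)%N -> (0 < s)%N -> ~~ odd s ->
  qchi (1 + b) * qchi (-1 + b) = -1 ->
  size (gp s a b c 1 1) = #|A11|.+1 -> (forall x, x \in A11 -> root (gp s a b c 1 1) x) ->
  (forall x, x \in A11 -> qchi x = 1) -> #|A11| = s.-1 ->
  size (gp s a b c 1 (-1)) = #|A1m|.+1 -> (forall x, x \in A1m -> root (gp s a b c 1 (-1)) x) ->
  (forall x, x \in A1m -> qchi x = -1) -> #|A1m| = s ->
  size (gp s a b c (-1) 1) = #|Am1|.+1 -> (forall x, x \in Am1 -> root (gp s a b c (-1) 1) x) ->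
  (forall x, x \in Am1 -> qchi x = 1) -> #|Am1| = s ->
  size (gp s a b c (-1) (-1)) = #|Amm|.+1 -> (forall x, x \in Amm -> root (gp s a b c (-1) (-1)) x) ->
  (forall x, x \in Amm -> qchi x = -1) -> #|Amm| = s.-1 ->
  False.
Proof.
move=> Hq Hs0 Hs Hperm S11 R11 E11 C11 S1m R1m E1m C1m Sm1 Rm1 Em1 Cm1 Smm Rmm Emm Cmm.
have Hs1 : (1 < s)%N by move: Hs0 Hs; clear; case: s => [|[|]].
have Hodd : odd s.-1 by move: Hs; rewrite -{1}(prednK Hs0) /=; case: (odd _).
have V11 := class_vieta Hq Hs0 S11 R11 E11.
have V1m := class_vieta Hq Hs0 S1m R1m E1m.
have Vm1 := class_vieta Hq Hs0 Sm1 Rm1 Em1.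
have Vmm := class_vieta Hq Hs0 Smm Rmm Emm.
set L := (('X + a%:P) ^+ s)`_s.-1.
have L11 : lead_coef (gp s a b c 1 1) = (1 + b) * L.
  by rewrite lead_coefE S11 C11 /= coef_gp_sm1.
have Lmm : lead_coef (gp s a b c (-1) (-1)) = (-1 + b) * L.
  by rewrite lead_coefE Smm Cmm /= coef_gp_sm1.
have L1m : lead_coef (gp s a b c 1 (-1)) = 2.
  by rewrite lead_coefE S1m C1m /= coef_gp_s // opprK.
have Lm1 : lead_coef (gp s a b c (-1) 1) = - 2.
  by rewrite lead_coefE Sm1 Cm1 /= coef_gp_s // -opprD.
have Lnz : L != 0.
  apply/negP => /eqP HL.
  have : lead_coef (gp s a b c 1 1) != 0.
    by rewrite lead_coef_eq0 -size_poly_eq0 S11.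
  by rewrite L11 HL mulr0 eqxx.
rewrite L11 C11 -signr_odd Hodd expr1 in V11.
rewrite Lmm Cmm opprK expr1n mulr1 in Vmm.
rewrite L1m C1m opprK expr1n mulr1 in V1m.
rewrite Lm1 Cm1 expN_even // expr1n mulr1 in Vm1.
rewrite etaM in V11. rewrite etaM in Vmm.
have H2 : qchi (- 2 : F) = - qchi (2 : F) by rewrite -mulN1r etaM etaN1 // mulN1r.
have Hbm : -1 + b != 0.
  apply/negP => /eqP Hb; move: Hperm; rewrite Hb eta0 // mulr0 => /eqP.
  by rewrite eq_sym oppr_eq0 oner_eq0.
have HY := eta_sq Hq Hbm.
have HL := eta_sq Hq Lnz.
have HXY : qchi (1 + b) * qchi L = qchi (-1 + b) * qchi L.
  by rewrite -Vmm Vm1 H2 -V1m V11; ring.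
have : qchi (1 + b) * qchi (-1 + b) * qchi L ^+ 2 = qchi (-1 + b) ^+ 2 * qchi L ^+ 2.
  have E : qchi (1 + b) * qchi (-1 + b) * qchi L ^+ 2 =
    (qchi (1 + b) * qchi L) * (qchi (-1 + b) * qchi L) by ring.
  by rewrite E HXY; ring.
rewrite Hperm HY HL mulr1 mul1r => /eqP.
by rewrite eq_sym (negbTE (one_neq_m1 Hq)).
Qed.


Lemma arith1 (n z a1 e1 a2 e2 a3 e3 a4 e4 g1 g2 g3 g4 s : nat) :
  (n + z <= a1 + e1 + a2 + e2 + a3 + e3 + a4 + e4 -> a1 + e1 < g1 -> a2 + e2 < g2 ->
  a3 + e3 < g3 -> a4 + e4 < g4 -> g1 <= s -> g2 <= s.+1 -> g3 <= s.+1 -> g4 <= s ->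
  0 < z -> n <= 4 * s - 3)%N.
Proof. lia. Qed.
Lemma arith2 (n a1 a2 a3 a4 g1 g2 g3 g4 s : nat) :
  (n <= a1 + a2 + a3 + a4 -> a1 < g1 -> a2 < g2 ->
  a3 < g3 -> a4 < g4 -> g1 <= s -> g2 <= s.+1 -> g3 <= s.+1 -> g4 <= s ->
  4 * s - 3 < n -> 0 < s ->
  (a1 = s.-1 /\ a2 = s /\ a3 = s /\ a4 = s.-1) /\ (g1 = a1.+1 /\ g2 = a2.+1 /\ g3 = a3.+1 /\ g4 = a4.+1))%N.
Proof. lia. Qed.

Lemma card_ind (T : finType) (A : {set T}) : #|A| = (\sum_(x : T) (x \in A : nat))%N.
Proof.
rewrite -sum1_card big_mkcond /=; apply: eq_bigr => x _.
by case: (x \in A).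
Qed.

Lemma class_bound (F : finFieldType) (p : {poly F}) (A E : {set F}) : p != 0 ->
  (forall x, x \in A -> root p x) -> (forall x, x \in E -> root p x) ->
  (forall x, x \in A -> x \in E -> False) -> (#|A| + #|E| < size p)%N.
Proof.
move=> Hp HA HE Hd.
have HI : A :&: E = set0.
  apply/setP => x; rewrite !inE; apply/negP => /andP [H1 H2].
  exact: (Hd x H1 H2).
have := cardsUI A E; rewrite HI cards0 addn0 => <-.
apply: card_roots_lt => // x; rewrite inE => /orP [] ?; [exact: HA | exact: HE].
Qed.

Lemma count_bound (F : finFieldType) s (a b c : F) : (#|F| %% 4 = 3)%N -> (0 < s)%N ->
  ~~ odd s -> b != 0 -> qchi (1 + b) * qchi (-1 + b) = -1 -> a != 0 ->
  (#|[set x : F | (fv s b (x + a) - fv s b x == c)%R]| <= 4 * s - 3)%N.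
Proof.
move=> Hq Hs0 Hs Hb Hperm Ha.
set Sol := [set x : F | fv s b (x + a) - fv s b x == c].
pose A e1 e2 := [set x in Sol | (qchi (x + a) == e1) && (qchi x == e2)].
pose E e1 e2 := [set x in Sol | ((x == 0) && (qchi a == e1)) ||
                                 ((x == -a) && (qchi (-a) == e2))].
pose Z := [set x in Sol | (x == 0) || (x == -a)].
have Hb1 : 1 + b != 0.
  apply/negP => /eqP Hb'; move: Hperm; rewrite Hb' eta0 // mul0r => /eqP.
  by rewrite eq_sym oppr_eq0 oner_eq0.
have Hbm : -1 + b != 0.
  apply/negP => /eqP Hb'; move: Hperm; rewrite Hb' eta0 // mulr0 => /eqP.
  by rewrite eq_sym oppr_eq0 oner_eq0.
have H2 := two_neq0 Hq.
have n1 : ((1 : F) == -1) = false by apply/negbTE/one_neq_m1.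
have n2 : ((-1 : F) == 1) = false by rewrite eq_sym n1.
have z1 : ((0 : F) == 1) = false by rewrite eq_sym oner_eq0.
have z2 : ((0 : F) == -1) = false by rewrite eq_sym oppr_eq0 oner_eq0.
have Hma : (-a == 0) = false by apply/negbTE; rewrite oppr_eq0.
have RA : forall e1 e2 x, x \in A e1 e2 -> root (gp s a b c e1 e2) x.
  move=> e1 e2 x; rewrite !inE => /andP [/eqP HS /andP [/eqP H1 /eqP H2']].
  exact: gp_root_class.
have RE : forall e1 e2 x, x \in E e1 e2 -> root (gp s a b c e1 e2) x.
  move=> e1 e2 x; rewrite !inE => /andP [/eqP HS /orP [/andP [/eqP Hx /eqP He]|/andP [/eqP Hx /eqP He]]].
    by rewrite Hx -He; apply: gp_root0 => //; move: HS; rewrite Hx add0r.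
  by rewrite Hx -He; apply: gp_rootma => //; move: HS; rewrite Hx addNr.
have DAE : forall e1 e2 x, e1 != 0 -> e2 != 0 -> x \in A e1 e2 -> x \in E e1 e2 -> False.
  move=> e1 e2 x He1 He2; rewrite !inE => /andP [_ /andP [/eqP H1 /eqP H2']].
  move=> /andP [_ /orP [/andP [/eqP Hx _]|/andP [/eqP Hx _]]].
    by move: H2'; rewrite Hx eta0 // => Hz; rewrite Hz eqxx in He2.
  by move: H1; rewrite Hx addNr eta0 // => Hz; rewrite Hz eqxx in He1.
have o1 : (1 : F) != 0 by rewrite oner_eq0.
have o2 : (-1 : F) != 0 by rewrite oppr_eq0 oner_eq0.
have G11 : gp s a b c 1 1 != 0.
  apply: gp_neq0 => //; have -> : (1 + 1 + 2 * b : F) = 2 * (1 + b) by ring.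
  by rewrite mulf_neq0.
have G1m : gp s a b c 1 (-1) != 0.
  apply: gp_neq0 => //; have -> : (1 + -1 + 2 * b : F) = 2 * b by ring.
  by rewrite mulf_neq0.
have Gm1 : gp s a b c (-1) 1 != 0.
  apply: gp_neq0 => //; have -> : (-1 + 1 + 2 * b : F) = 2 * b by ring.
  by rewrite mulf_neq0.
have Gmm : gp s a b c (-1) (-1) != 0.
  apply: gp_neq0 => //; have -> : (-1 + -1 + 2 * b : F) = 2 * (-1 + b) by ring.
  by rewrite mulf_neq0.
have B11 := class_bound G11 (@RA 1 1) (@RE 1 1) (fun x => @DAE 1 1 x o1 o1).
have B1m := class_bound G1m (@RA 1 (-1)) (@RE 1 (-1)) (fun x => @DAE 1 (-1) x o1 o2).
have Bm1 := class_bound Gm1 (@RA (-1) 1) (@RE (-1) 1) (fun x => @DAE (-1) 1 x o2 o1).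
have Bmm := class_bound Gmm (@RA (-1) (-1)) (@RE (-1) (-1)) (fun x => @DAE (-1) (-1) x o2 o2).
have S11 := size_gp_same a b c 1 Hs0.
have Smm := size_gp_same a b c (-1) Hs0.
have S1m := size_gp a b c 1 (-1) Hs0.
have Sm1 := size_gp a b c (-1) 1 Hs0.
pose A11 := A 1 1. pose E11 := E 1 1. pose A1m := A 1 (-1). pose E1m := E 1 (-1).
pose Am1 := A (-1) 1. pose Em1 := E (-1) 1. pose Amm := A (-1) (-1). pose Emm := E (-1) (-1).
have Hsum : (#|Sol| + #|Z| <= #|A11| + #|E11| + #|A1m| + #|E1m|
                + #|Am1| + #|Em1| + #|Amm| + #|Emm|)%N.
  rewrite !card_ind -!big_split /=; apply: leq_sum => x _.
  rewrite /A11 /E11 /A1m /E1m /Am1 /Em1 /Amm /Emm /A /E /Z !inE.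
  case: (fv s b (x + a) - fv s b x == c); rewrite /= ?andbF //.
  have [->|Hnz0] := eqVneq x 0.
    rewrite add0r eta0 // z1 z2 eq_sym Hma /= !andbF.
    by have [->|->] := eta_pm Hq Ha; rewrite ?n1 ?n2 eqxx //=.
  have [->|Hnza] := eqVneq x (-a).
    rewrite addNr eta0 // z1 z2 ?eqxx /= ?andbF.
    have Hma' : -a != 0 by rewrite Hma.
    by have [->|->] := eta_pm Hq Hma'; rewrite ?n1 ?n2 eqxx //=.
  have Hnza' : x + a != 0 by rewrite addr_eq0.
  rewrite /= ?andbF.
  have [->|->] := eta_pm Hq Hnza'; have [->|->] := eta_pm Hq Hnz0; rewrite ?n1 ?n2 ?eqxx //=.
move: Hsum; rewrite /A11 /E11 /A1m /E1m /Am1 /Em1 /Amm /Emm => Hsum.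
case: (posnP #|Z|) => HZ; last by apply: (arith1 Hsum B11 B1m Bm1 Bmm S11 S1m Sm1 Smm HZ).
have EZ : forall e1 e2, #|E e1 e2| = 0%N.
  move=> e1 e2; apply/eqP; rewrite -leqn0 -HZ; apply: subset_leq_card.
  apply/subsetP => x; rewrite !inE => /andP [-> /orP [/andP [-> _]|/andP [-> _]]] //.
  by rewrite orbT.
rewrite !EZ in Hsum B11 B1m Bm1 Bmm.
have QA : forall e1 e2 x, x \in A e1 e2 -> qchi x = e2.
  by move=> e1 e2 x; rewrite !inE => /andP [_ /andP [_ /eqP]].
rewrite leqNgt; apply/negP => Hgt.
rewrite HZ !addn0 in Hsum B11 B1m Bm1 Bmm.
have [[C11 [C1m [Cm1 Cmm]]] [Z11 [Z1m [Zm1 Zmm]]]] :=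
  arith2 Hsum B11 B1m Bm1 Bmm S11 S1m Sm1 Smm Hgt Hs0.
exact: (final_contra Hq Hs0 Hs Hperm Z11 (@RA 1 1) (@QA 1 1) C11
   Z1m (@RA 1 (-1)) (@QA 1 (-1)) C1m Zm1 (@RA (-1) 1) (@QA (-1) 1) Cm1
   Zmm (@RA (-1) (-1)) (@QA (-1) (-1)) Cmm).
Qed.

Unset Implicit Arguments.

Theorem theorem1p2 (F : finFieldType) (s : nat) (b : F) :
  (#|F| %% 4 = 3)%N -> (0 < s)%N -> ~~ odd s -> b != 0 ->
  is_perm_poly ('X^s * ('X^((#|F| - 1) %/ 2) + b%:P)) ->
  (diff_unif ('X^s * ('X^((#|F| - 1) %/ 2) + b%:P)) <= 4 * s - 3)%N.
Proof.
move=> Hq Hs0 Hs Hb [g H1 H2].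
have Hinj : injective (fv s b).
  move=> x y Exy; rewrite -(H1 x) -(H1 y); congr g; rewrite !horner_f; exact: Exy.
have Hpc := perm_cond Hq Hs0 Hs Hinj.
rewrite /diff_unif; apply/bigmax_leqP => a Ha; apply/bigmax_leqP => c _.
rewrite /diff_count.
have -> : [set x | ('X^s * ('X^((#|F| - 1) %/ 2) + b%:P)).[x + a]
                    - ('X^s * ('X^((#|F| - 1) %/ 2) + b%:P)).[x] == c]
        = [set x : F | fv s b (x + a) - fv s b x == c].
  by apply/setP => x; rewrite !inE !horner_f.
exact: count_bound.
Qed.
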